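(* Let $G$ be a non-complete double-critical $k$-chromatic graph and let $xy\in E(G)$. If $A(xy)$ is non-empty, then the induced subgraph $G[A(xy)]$ has no isolated vertices, i.e. $\delta(G[A(xy)])\ge 1$. Similarly, if $C(xy)$ is non-empty, then $\delta(G[C(xy)])\ge 1$.
   Context: All graphs are finite and simple. A graph $G$ is (vertex-)critical if $\chi(G-v)<\chi(G)$ for every vertex $v\in V(G)$. A critical graph $G$ is double-critical if $\chi(G-x-y)\le\chi(G)-2$ for every edge $xy\in E(G)$. For an edge $xy$, $A(xy):=N(x)\setminus N[y]$ and $C(xy):=N(y)\setminus N[x]$, where $N(v)$ is the open and $N[v]=N(v)\cup\{v\}$ the closed neighbourhood. *)

(* Defs.v *)
From mathcomp Require Import all_boot.
Set Implicit Arguments. Unset Strict Implicit. Unset Printing Implicit Defensive.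

Definition simple_graph (T : finType) (e : rel T) : Prop :=
  symmetric e /\ irreflexive e.

Definition colorable (T : finType) (e : rel T) (S : {set T}) (k : nat) : bool :=
  [exists f : {ffun T -> 'I_k},
     [forall x in S, forall y in S, e x y ==> (f x != f y)]].

Lemma colorable_card (T : finType) (e : rel T) (S : {set T}) :
  irreflexive e -> exists k, colorable e S k.
Proof.
move=> irr; exists #|T|; apply/existsP.
exists [ffun x => enum_rank x]; apply/forallP => x; apply/implyP => _.
apply/forallP => y; apply/implyP => _; apply/implyP => exy.
rewrite !ffunE; apply/negP => /eqP /enum_rank_inj exy'.
by move: exy; rewrite exy' irr.
Qed.

(* Chromatic number of the induced subgraph G[S]: least k such that G[S] is
   k-colourable, found by searching k = 0,1,...,#|T| (find returns the index,
   which equals k in iota 0).  By colorable_card, for irreflexive e a k <= #|T|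
   always exists, so this is the true chromatic number. *)
Definition chi (T : finType) (e : rel T) (S : {set T}) : nat :=
  let P := fun k => colorable e S k in
  find P (iota 0 #|T|.+1).

Definition chiG (T : finType) (e : rel T) : nat := chi e [set: T].

Definition nbhd (T : finType) (e : rel T) (v : T) : {set T} := [set u | e v u].
Definition cnbhd (T : finType) (e : rel T) (v : T) : {set T} := v |: nbhd e v.

Definition critical (T : finType) (e : rel T) : Prop :=
  forall v : T, chi e [set~ v] < chiG e.

Definition double_critical (T : finType) (e : rel T) : Prop :=
  critical e /\
  forall x y : T, e x y -> chi e (~: [set x; y]) <= chiG e - 2.

Definition complete (T : finType) (e : rel T) : Prop :=
  forall x y : T, x != y -> e x y.

Definition Aset (T : finType) (e : rel T) (x y : T) : {set T} :=
  nbhd e x :\: cnbhd e y.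
Definition Cset (T : finType) (e : rel T) (x y : T) : {set T} :=
  nbhd e y :\: cnbhd e x.

Definition no_isolated (T : finType) (e : rel T) (S : {set T}) : Prop :=
  forall v, v \in S -> exists2 u, u \in S & e v u.

(* Main.v *)
Require Import Defs.
From mathcomp Require Import all_boot.
Set Implicit Arguments. Unset Strict Implicit. Unset Printing Implicit Defensive.

Lemma colT (T : finType) (e : rel T) (S : {set T}) :
  irreflexive e -> colorable e S #|T|.
Proof.
move=> irr; apply/existsP.
exists [ffun x => enum_rank x]; apply/forallP => x; apply/implyP => _.
apply/forallP => y; apply/implyP => _; apply/implyP => exy.
rewrite !ffunE; apply/negP => /eqP /enum_rank_inj exy'.
by move: exy; rewrite exy' irr.
Qed.

Lemma chi_spec (T : finType) (e : rel T) (S : {set T}) :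
  irreflexive e -> colorable e S (chi e S).
Proof.
move=> irr; rewrite /chi.
have hs : has (fun k => colorable e S k) (iota 0 #|T|.+1).
  apply/hasP; exists #|T|; first by rewrite mem_iota add0n ltnSn.
  exact: colT.
have hf := hs; rewrite has_find size_iota in hf.
by have := nth_find 0 hs; rewrite nth_iota // add0n.
Qed.

Lemma chi_min (T : finType) (e : rel T) (S : {set T}) m :
  irreflexive e -> colorable e S m -> chi e S <= m.
Proof.
move=> irr cm; rewrite /chi.
have hs : has (fun k => colorable e S k) (iota 0 #|T|.+1).
  apply/hasP; exists #|T|; first by rewrite mem_iota add0n ltnSn.
  exact: colT.
have := hs; rewrite has_find size_iota => hf.
case: (leqP m #|T|) => hm; last by apply: leq_trans (ltnW hm); rewrite -ltnS.
rewrite leqNgt; apply/negP => lt.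
have := before_find 0 lt; rewrite nth_iota; last by rewrite ltnS.
by rewrite add0n cm.
Qed.

Lemma keyA (T : finType) (e : rel T) (x y a : T) :
  simple_graph e -> double_critical e -> e x y -> a \in Aset e x y ->
  (forall u, u \in Aset e x y -> ~~ e a u) -> False.
Proof.
move=> [sym irr] [_ dc] exy aA iso.
have := aA; rewrite /Aset /cnbhd /nbhd !inE negb_or => /andP [/andP [nay eya] exa].
have ay : ~~ e a y by rewrite sym.
set K := chiG e.
have hc := dc x a exa.
have cm : colorable e (~: [set x; a]) (K - 2).
  have := chi_spec (~: [set x; a]) irr => /existsP [f /forallP Hf].
  apply/existsP; exists [ffun v => widen_ord hc (f v)].
  apply/forallP => u; apply/implyP => hu; apply/forallP => v; apply/implyP => hv.
  apply/implyP => euv; rewrite !ffunE.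
  have := Hf u; rewrite hu /= => /forallP /(_ v); rewrite hv euv /=.
  by apply: contra => /eqP [] /val_inj ->.
move: cm; set m := K - 2 => /existsP [f /forallP Hf].
have yD : y \in ~: [set x; a].
  rewrite !inE negb_or; apply/andP; split.
    by apply/eqP => yx; move: exy; rewrite yx irr.
  by apply/eqP => ya; move: nay; rewrite ya eqxx.
have Hf' : forall u v, u \in ~: [set x; a] -> v \in ~: [set x; a] -> e u v ->
   f u != f v.
  move=> u v hu hv euv; have := Hf u; rewrite hu /= => /forallP /(_ v).
  by rewrite hv euv.
have Hc0 : 0 < m by case: (f y) => i Hi; exact: leq_ltn_trans (leq0n i) Hi.
pose h v : nat := if v == x then m else if v == a then nat_of_ord (f y)
   else if (f v == f y) && e a v then m else f v.
have hlt : forall v, h v < m.+1.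
  by move=> v; rewrite /h; case: ifP => // _; case: ifP => _;
    [ | case: ifP => _ //]; rewrite ltnS ltnW.
have hinj : forall u v, e u v -> h u != h v.
  have key : forall u v, e u v -> u != x -> u != a -> v != x -> v != a ->
      f u != f v.
    move=> u v euv ux ua vx va; apply: Hf' => //;
      by rewrite !inE negb_or ?ux ?ua ?vx ?va.
  have DX : forall v, v != x -> v != a -> v \in ~: [set x; a].
    by move=> v vx va; rewrite !inE negb_or vx va.
  have caseX : forall v, e x v -> h v != m.
    move=> v exv; rewrite /h.
    have vx : v != x by apply/eqP => vx; move: exv; rewrite vx irr.
    rewrite (negbTE vx); case: ifP => va; first by rewrite neq_ltn ltn_ord.
    case: ifP => /= H; last by rewrite neq_ltn ltn_ord.
    exfalso; move/andP: H => [/eqP fvy eav].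
    have vy : v != y.
      by apply/eqP => vy; move: ay; rewrite -vy eav.
    have nvy : ~~ e y v.
      apply/negP => eyv; have := Hf' y v yD (DX v vx (negbT va)) eyv.
      by rewrite fvy eqxx.
    have vA : v \in Aset e x y.
      by rewrite /Aset /cnbhd /nbhd !inE negb_or vy nvy exv.
    by move: (iso v vA); rewrite eav.
  have caseA : forall v, e a v -> h v != f y.
    move=> v eav; rewrite /h.
    have va : v != a by apply/eqP => va; move: eav; rewrite va irr.
    rewrite (negbTE va); case: ifP => vx.
      by rewrite neq_ltn ltn_ord orbT.
    rewrite eav andbT; case: ifP => H; first by rewrite neq_ltn ltn_ord orbT.
    by apply/negP => /eqP /val_inj /eqP; rewrite H.
  have hX : h x = m by rewrite /h eqxx.
  have hA : h a = f y.
    rewrite /h eqxx; case: ifP => // /eqP ax.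
    by move: exa; rewrite ax irr.
  move=> u v euv.
  have evu : e v u by rewrite sym.
  case: (eqVneq u x) => [ux | ux]; first by subst u; rewrite hX eq_sym; apply: caseX.
  case: (eqVneq v x) => [vx | vx]; first by subst v; rewrite hX; apply: caseX.
  case: (eqVneq u a) => [ua | ua]; first by subst u; rewrite hA eq_sym; apply: caseA.
  case: (eqVneq v a) => [va | va]; first by subst v; rewrite hA; apply: caseA.
  rewrite /h (negbTE ux) (negbTE vx) (negbTE ua) (negbTE va).
  have fuv := key u v euv ux ua vx va.
  case: ifP => /andP Hu; case: ifP => /andP Hv.
  - by case: Hu Hv => /eqP fu _ [/eqP fv _]; move: fuv; rewrite fu fv eqxx.
  - by rewrite neq_ltn ltn_ord orbT.
  - by rewrite neq_ltn ltn_ord.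
  - by apply: contra fuv => /eqP /val_inj ->.
have col : colorable e [set: T] m.+1.
  apply/existsP; exists [ffun v => Ordinal (hlt v)].
  apply/forallP => u; apply/implyP => _; apply/forallP => v; apply/implyP => _.
  apply/implyP => euv; rewrite !ffunE; exact: hinj.
have := chi_min irr col; rewrite -/(chiG e) -/K.
move: Hc0; rewrite /m; clearbody h; clear -K.
case: K => [|[|K']] //= _.
by rewrite subn2 /= ltnn.
Qed.

Theorem proposition9 (T : finType) (e : rel T) (k : nat) (x y : T) :
  simple_graph e -> chiG e = k -> double_critical e -> ~ complete e ->
  e x y ->
  (Aset e x y != set0 -> no_isolated e (Aset e x y)) /\
  (Cset e x y != set0 -> no_isolated e (Cset e x y)).
Proof.
move=> sg _ dc _ exy.
have gen : forall x y, e x y -> no_isolated e (Aset e x y).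
  move=> x' y' e' v vA.
  case: (boolP [exists u, (u \in Aset e x' y') && e v u]).
    by move=> /existsP [u /andP [uA evu]]; exists u.
  rewrite negb_exists => /forallP H; exfalso.
  apply: (keyA sg dc e' vA) => u uA.
  by have := H u; rewrite uA.
split=> _; first exact: gen.
have -> : Cset e x y = Aset e y x by [].
apply: gen; by case: sg => sym _; rewrite sym.
Qed.
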